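(* The algorithm RATT described in the context runs in $O(|\mathcal{U}_{\mathcal{V}}|^2)$ time, where $\mathcal{U}_{\mathcal{V}}=\bigcup_{i\in\mathcal{V}}\mathcal{U}_i$ is the joint set of available control inputs of all robots (each evaluation of the objective $\Phi$ counting as one operation).
   Context: There are $N$ robots $\mathcal{V}=\{1,\dots,N\}$, robot $i$ choosing its control input from a finite nonempty set $\mathcal{U}_i$. $\Phi(\mathcal{W})$ denotes the team tracking quality obtained when the robots in $\mathcal{W}\subseteq\mathcal{V}$ (with their chosen inputs) fuse their measurements. Given integers $\alpha_s\le N$ and $\alpha_c\le N(N-1)/2$: CAA$(N,\alpha_c)$: set $e_r=N(N-1)/2-\alpha_c$; for $n=1,\dots,N$ in increasing order compute $q_n=\lfloor N/n\rfloor$, $r_n=N-nq_n$, $\bar e_n=q_n\frac{n(n-1)}{2}+\frac{r_n(r_n-1)}{2}$, and let $n_{\max}$ be the first $n$ with $e_r\le\bar e_n$; return $\alpha_{c,s}=N-n_{\max}$. RATT: compute $\alpha_{c,s}$ by CAA, set $\alpha=\alpha_s+\alpha_{c,s}$. If $\alpha<N$: for each robot $i$ compute $\max_{\mathbf{u}_i\in\mathcal{U}_i}\Phi(\{i\})$; select the $\alpha$ robots with the largest values and assign each the input attaining its individual maximum; then assign inputs to the remaining robots by the standard greedy algorithm (starting from $\mathcal{V}_g=\emptyset$, repeatedly choose an unassigned robot and input maximizing the marginal gain $\Phi(\mathcal{V}_g\cup\{i'\})-\Phi(\mathcal{V}_g)$ and add it to $\mathcal{V}_g$). If $\alpha\ge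 N$: assign each robot the input maximizing $\Phi(\{i\})$. *)

(* Defs.v *)
From mathcomp Require Import all_boot all_order all_algebra.
Set Implicit Arguments. Unset Strict Implicit. Unset Printing Implicit Defensive.
Import Order.TTheory GRing.Theory Num.Theory.
Local Open Scope ring_scope.

(* ---- A tiny cost monad: a value together with the number of elementary
   operations spent computing it. ---- *)
Definition M (T : Type) := (T * nat)%type.
Definition retM {T} (x : T) : M T := (x, 0%N).
Definition bindM {T S} (m : M T) (k : T -> M S) : M S :=
  let: (x, c) := m in let: (y, d) := k x in (y, (c + d)%N).
Definition tick {T} (n : nat) (x : T) : M T := (x, n).

Section RATT.
Variables (R : realDomainType) (A : eqType) (N : nat).
(* U i = finite nonempty set of control inputs of robot i (as a list). *)
Variable U : 'I_N -> seq A.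
(* An assignment of inputs to a subset W of robots: robots outside W are
   mapped to None. Phi f is the team tracking quality Phi(W). *)
Variable Phi : {ffun 'I_N -> option A} -> R.

Definition assign_empty : {ffun 'I_N -> option A} := [ffun => None].
Definition assign_upd (f : {ffun 'I_N -> option A}) (i : 'I_N) (u : A) :
  {ffun 'I_N -> option A} := [ffun j => if j == i then Some u else f j].

Definition evalPhi (f : {ffun 'I_N -> option A}) : M R := (Phi f, 1%N).

Fixpoint best_of {T} (s : seq T) (score : T -> M R) (cur : option (T * R))
  : M (option (T * R)) :=
  match s with
  | [::] => retM cur
  | x :: s' =>
      bindM (score x) (fun v => bindM (tick 1 tt) (fun _ =>
        let cur' := match cur with
                    | None => Some (x, v)
                    | Some (y, w) => if w < v then Some (x, v) else cur
                    end in
        best_of s' score cur'))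
  end.

Fixpoint mapM {T S} (f : T -> M S) (s : seq T) : M (seq S) :=
  match s with
  | [::] => retM [::]
  | x :: s' => bindM (f x) (fun y => bindM (mapM f s') (fun ys => retM (y :: ys)))
  end.

Definition ebar (n : nat) : nat :=
  let q := (N %/ n)%N in let r := (N - n * q)%N in
  (q * (n * (n - 1) %/ 2) + r * (r - 1) %/ 2)%N.

Definition caa (alpha_c : nat) : M nat :=
  let er := (N * (N - 1) %/ 2 - alpha_c)%N in
  let fix loop (ns : seq nat) : M nat :=
      match ns with
      | [::] => retM N
      | n :: ns' => bindM (tick 1 tt) (fun _ =>
                      if (er <= ebar n)%N then retM n else loop ns')
      end in
  bindM (loop (iota 1 N)) (fun nmax => retM (N - nmax)%N).

Definition indiv_best (i : 'I_N) : M (option (A * R)) :=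
  best_of (U i) (fun u => evalPhi (assign_upd assign_empty i u)) None.

Fixpoint select_top (k : nat) (value : 'I_N -> R) (sel : seq 'I_N)
  : M (seq 'I_N) :=
  match k with
  | 0 => retM sel
  | k'.+1 =>
      bindM (best_of [seq i <- enum 'I_N | i \notin sel]
                     (fun i => retM (value i)) None)
            (fun b => match b with
                      | None => retM sel
                      | Some (i, _) => select_top k' value (i :: sel)
                      end)
  end.

Fixpoint greedy (k : nat) (Vg : {ffun 'I_N -> option A}) (unassigned : seq 'I_N)
  : M {ffun 'I_N -> option A} :=
  match k with
  | 0 => retM Vg
  | k'.+1 =>
      bindM (evalPhi Vg) (fun base =>
      bindM (best_of [seq (i, u) | i <- unassigned, u <- U i]
               (fun p => bindM (evalPhi (assign_upd Vg p.1 p.2))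
                               (fun v => tick 1 (v - base))) None)
            (fun b => match b with
                      | None => retM Vg
                      | Some ((i, u), _) =>
                          greedy k' (assign_upd Vg i u)
                                 [seq j <- unassigned | j != i]
                      end))
  end.

Definition ratt (alpha_s alpha_c : nat) : M {ffun 'I_N -> option A} :=
  bindM (caa alpha_c) (fun alpha_cs =>
  let alpha := (alpha_s + alpha_cs)%N in
  bindM (mapM indiv_best (enum 'I_N)) (fun bests =>
  let best (i : 'I_N) := nth None bests i in
  let value (i : 'I_N) := odflt 0 (omap snd (best i)) in
  let input (i : 'I_N) := omap fst (best i) in
  if (alpha < N)%N then
    bindM (select_top alpha value [::]) (fun sel =>
    let rest := [seq i <- enum 'I_N | i \notin sel] in
    bindM (greedy (size rest) assign_empty rest) (fun Vg =>
    retM [ffun i => if i \in sel then input i else Vg i]))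
  else retM [ffun i => input i])).

Definition ratt_cost (alpha_s alpha_c : nat) : nat := (ratt alpha_s alpha_c).2.

End RATT.

(* The joint set U_V of available control inputs of all robots
   (inputs of different robots are distinct: disjoint union). *)
Definition joint_inputs {A : eqType} {N : nat} (U : 'I_N -> seq A)
  : seq ('I_N * A) := [seq (i, u) | i <- enum 'I_N, u <- U i].

(* Main.v *)
Require Import Defs.
From mathcomp Require Import all_boot all_order all_algebra.
From mathcomp Require Import zify.

Lemma bindM_snd T S (m : M T) (k : T -> M S) : (bindM m k).2 = (m.2 + (k m.1).2)%N.
Proof. by case: m => x c /=; case: (k x). Qed.

Lemma letE T (a : nat) (p : T * nat) : (let '(y, d) := p in (y, (a + d)%N)).2 = (a + p.2)%N.
Proof. by case: p. Qed.

Lemma best_of_cost (R : realDomainType) T (s : seq T) (score : T -> M R) c :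
  (forall x, (score x).2 <= c)%N ->
  forall cur, ((best_of s score cur).2 <= c.+1 * size s)%N.
Proof.
move=> H; elim: s => [|x s IH] cur; first by [].
rewrite /= bindM_snd.
case: (score x) (H x) => v cx /= Hx.
match goal with |- context[best_of s score ?X] =>
  have := IH X; case: (best_of s score X) => y d /= end.
rewrite mulnS; lia.
Qed.



Lemma mapM_cost T S (f : T -> M S) (s : seq T) :
  (mapM f s).2 = sumn [seq (f x).2 | x <- s].
Proof.
elim: s => [|x s IH] //=; rewrite bindM_snd bindM_snd /= IH; lia.
Qed.

Lemma sumn_filter T (f : T -> nat) (P : pred T) s :
  (sumn [seq f x | x <- filter P s] <= sumn [seq f x | x <- s])%N.
Proof. elim: s => [|x s IH] //=; case: (P x) => /=; lia. Qed.

Lemma sumn_le T (f g : T -> nat) s : (forall x, f x <= g x)%N ->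
  (sumn [seq f x | x <- s] <= sumn [seq g x | x <- s])%N.
Proof. move=> H; elim: s => [|x s IH] //=; have := H x; lia. Qed.

Lemma select_top_cost (R : realDomainType) N k (value : 'I_N -> R) sel :
  ((select_top k value sel).2 <= k * N)%N.
Proof.
elim: k sel => [|k IH] sel //=.
rewrite bindM_snd.
have H1 := @best_of_cost R _ [seq i <- enum 'I_N | i \notin sel]
   (fun i => retM (value i)) 0 (fun _ => leqnn 0) None.
have H2 : (size [seq i <- enum 'I_N | i \notin sel] <= N)%N.
  by rewrite -[X in (_ <= X)%N]size_enum_ord size_filter count_size.
case: (best_of _ _ _) H1 => [[[i v]|] c] /= H1.
- have := IH (i :: sel); rewrite mulSn; rewrite mul1n in H1.
  move: H1 H2; move: (size _) => a; move: (_.2) => b; lia.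
- rewrite mulSn; rewrite mul1n in H1; move: H1 H2; move: (size _) => a; lia.
Qed.

Lemma greedy_cost (R : realDomainType) (A : eqType) N (U : 'I_N -> seq A)
  (Phi : {ffun 'I_N -> option A} -> R) S k :
  forall Vg un, (sumn [seq size (U x) | x <- un] <= S)%N ->
  ((greedy U Phi k Vg un).2 <= k * (1 + 3 * S))%N.
Proof.
elim: k => [|k IH] Vg un Hun; first by [].
rewrite /= letE bindM_snd.
set L := [seq (i, u) | i <- un, u <- U i].
have H1 := @best_of_cost R _ L
   (fun p => bindM (evalPhi Phi (assign_upd Vg p.1 p.2)) (fun v => tick 1 (v - Phi Vg)%R))
   2 (fun p => leqnn 2) None.
have HL : (size L <= S)%N by rewrite /L size_allpairs_dep.
case: (best_of _ _ _) H1 => [[[[i u] v]|] c] /= H1.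
- have := IH (assign_upd Vg i u) [seq j <- un | j != i]
     (leq_trans (sumn_filter _ _ _ _) Hun).
  rewrite [k.+1 * _]mulSn; move: H1 HL; move: (size L) => a; move: (k * _) => K; move: (_.2) => b; lia.
- rewrite [k.+1 * _]mulSn; move: H1 HL; move: (size L) => a; move: (k * _) => K; lia.
Qed.

Lemma caa_cost N ac : ((caa N ac).2 <= N)%N.
Proof.
rewrite /caa bindM_snd /= addn0.
apply: (@leq_trans (size (iota 1 N))); last by rewrite size_iota.
elim: (iota 1 N) => [|n ns IH] //=.
rewrite letE; case: ifP => _ /=.
- lia.
- move: IH; move: (_.2) => b; move: (size ns) => a; lia.
Qed.

Lemma sumn_const1 T (s : seq T) : sumn [seq 1%N | _ <- s] = size s.
Proof. by elim: s => //= x s ->. Qed.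

Lemma sumn_double T (f : T -> nat) s : sumn [seq (f x + f x)%N | x <- s] = (2 * sumn [seq f x | x <- s])%N.
Proof. elim: s => //= x s ->; lia. Qed.

Theorem theorem2 :
  exists C : nat,
  forall (R : realDomainType) (A : eqType) (N : nat) (U : 'I_N -> seq A)
         (Phi : {ffun 'I_N -> option A} -> R) (alpha_s alpha_c : nat),
    (forall i, U i != [::]) ->
    (forall i, uniq (U i)) ->
    (alpha_s <= N)%N ->
    (alpha_c <= N * (N - 1) %/ 2)%N ->
    (ratt_cost U Phi alpha_s alpha_c <= C * (size (joint_inputs U)) ^ 2)%N.
Proof.
exists 8 => R A N U Phi als alc HU _ _ _.
set S := size (joint_inputs U).
have ES : S = sumn [seq size (U i) | i <- enum 'I_N].
  by rewrite /S /joint_inputs size_allpairs_dep.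
have HNS : (N <= S)%N.
  rewrite ES -{1}(size_enum_ord N) -sumn_const1; apply: sumn_le => i.
  by rewrite lt0n size_eq0.
have Hind : ((mapM (indiv_best U Phi) (enum 'I_N)).2 <= 2 * S)%N.
  rewrite mapM_cost ES -sumn_double; apply: sumn_le => i.
  have := @best_of_cost R _ (U i) (fun u => evalPhi Phi (assign_upd (assign_empty A N) i u)) 1
     (fun _ => leqnn 1) None.
  rewrite /indiv_best; lia.
rewrite /ratt_cost /ratt bindM_snd.
rewrite (bindM_snd _ _ (mapM _ _)) /=.
have Hcaa := caa_cost N alc.
have HS2 : (S <= S ^ 2)%N by rewrite expnS expn1; case: (S) => //= n; rewrite leq_pmulr.
case: ifP => Hlt.
- rewrite bindM_snd /=.
  set sel := (select_top _ _ _).1.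
  rewrite bindM_snd /= addn0.
  have Hsel := @select_top_cost R N (als + (caa N alc).1)
     (fun i : 'I_N => odflt 0%R (omap snd (nth None (mapM (indiv_best U Phi) (enum 'I_N)).1 i))) [::].
  have Hsz : (size [seq i <- enum 'I_N | i \notin sel] <= N)%N.
    by rewrite -[X in (_ <= X)%N]size_enum_ord size_filter count_size.
  have Hg := @greedy_cost R A N U Phi S (size [seq i <- enum 'I_N | i \notin sel])
     (assign_empty A N) [seq i <- enum 'I_N | i \notin sel]
     (leq_trans (sumn_filter _ _ _ _) (eq_leq (esym ES))).
  have B1 : ((als + (caa N alc).1) * N <= S * S)%N.
    by apply: leq_mul; [apply: leq_trans (ltnW Hlt) HNS | ].
  have B2 : (size [seq i <- enum 'I_N | i \notin sel] * (1 + 3 * S) <= S * (1 + 3 * S))%N.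
    by apply: leq_mul => //; apply: leq_trans Hsz HNS.
  move: Hsel Hg B1 B2 Hind Hcaa HS2 HNS.
  rewrite expnS expn1.
  move: (select_top _ _ _).2 (greedy _ _ _ _ _).2 (mapM _ _).2 (caa _ _).2 => a b c d.
  move: (_ * N)%N (size _ * _)%N => X Y.
  nia.
- rewrite /= addn0; lia.
Qed.
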